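(* Let $f:\mathbb{R}^d\to\mathbb{R}$ satisfy: $f$ is continuously differentiable on the level set $L(\mathbf{x}_1)=\{\mathbf{z}: f(\mathbf{z})\le f(\mathbf{x}_1)\}$, bounded below on it, and $\nabla f$ is $L$-Lipschitz on it. Run the Linear UCB Method (described in the context) with regularizer $\lambda>0$ and memory parameter $M\ge 0$. Then for each $k=1,2,\dots,K$ and every $\mathbf{s}\in\mathbb{R}^d$ with $\|\mathbf{s}\|=1$, $$\big|\mathbf{s}^\top(\nabla f(\mathbf{x}_k)-\mathbf{g}_k)\big|\le\sqrt{\frac{d(M+1)}{\lambda}}\sum_{i=\ell(k)}^{k-1}\|\nabla f(\mathbf{x}_i)-\nabla f(\mathbf{x}_{i+1})\|+\sqrt{\lambda}\,\|\nabla f(\mathbf{x}_k)\|\,\|\mathbf{s}\|_{\mathbf{C}_k^{-1}},$$ where $\ell(k):=\max\{1,k-M-1\}$ and the summation is interpreted as $0$ when $k=1$.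
   Context: For a positive definite matrix $\mathbf{A}$, $\|\mathbf{x}\|_{\mathbf{A}}:=(\mathbf{x}^\top\mathbf{A}\mathbf{x})^{1/2}$. Linear UCB Method: inputs are an initial point $\mathbf{x}_1$, horizon $K$, regularizer $\lambda>0$, stepsizes $\alpha_k>0$, and an integer memory parameter $M\ge0$. Initialize $\mathbf{C}_1=\lambda\mathbf{I}_d$, $\mathbf{b}_1=\mathbf{0}$, $\mathbf{g}_1=\mathbf{0}$. For $k=1,\dots,K$: choose some $U_k\ge\|\nabla f(\mathbf{x}_k)\|$; let $\mathbf{s}_k$ be a maximizer of $\mathbf{g}_k^\top\mathbf{s}+\sqrt{\lambda}U_k\|\mathbf{s}\|_{\mathbf{C}_k^{-1}}$ over $\{\mathbf{s}:\|\mathbf{s}\|=1\}$; set $r_k=\langle\nabla f(\mathbf{x}_k),\mathbf{s}_k\rangle$; set $\mathbf{C}_{k+1}=\lambda\mathbf{I}_d+\sum_{j=\max\{1,k-M\}}^{k}\mathbf{s}_j\mathbf{s}_j^\top$, $\mathbf{b}_{k+1}=\sum_{j=\max\{1,k-M\}}^{k}r_j\mathbf{s}_j$, $\mathbf{g}_{k+1}=\mathbf{C}_{k+1}^{-1}\mathbf{b}_{k+1}$; and set $\mathbf{x}_{k+1}=\mathbf{x}_k-\alpha_kr_k\mathbf{s}_k$. *)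

(* Defs.v *)
From HB Require Import structures.
From mathcomp Require Import all_boot all_order all_algebra.
From mathcomp Require Import all_classical all_reals all_analysis.
Set Implicit Arguments. Unset Strict Implicit. Unset Printing Implicit Defensive.
Import Order.TTheory GRing.Theory Num.Theory.
Import numFieldNormedType.Exports.
Local Open Scope ring_scope.

Section UCB.
Variables (R : realType) (d : nat).

Definition enorm (v : 'cV[R]_d) : R := Num.sqrt (\sum_(i < d) v i 0 ^+ 2).

Definition anorm (A : 'M[R]_d) (v : 'cV[R]_d) : R :=
  Num.sqrt ((v^T *m A *m v) 0 0).

Definition inner (u v : 'cV[R]_d) : R := (u^T *m v) 0 0.

Definition grad (f : 'cV[R]_d -> R) (x : 'cV[R]_d) : 'cV[R]_d :=
  \col_(i < d) ('D_(delta_mx i 0 : 'cV[R]_d) f x).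

Definition levelset (f : 'cV[R]_d -> R) (x1 : 'cV[R]_d) : set 'cV[R]_d :=
  [set z | f z <= f x1].

(* For k = 1 the sums are empty: C_1 = lam I, b_1 = 0, g_1 = 0. *)
Definition ucbC (lam : R) (M : nat) (s : nat -> 'cV[R]_d) (k : nat) : 'M[R]_d :=
  lam%:M + \sum_(maxn 1 (k.-1 - M) <= j < k) (s j *m (s j)^T).

Definition ucbr (f : 'cV[R]_d -> R) (x s : nat -> 'cV[R]_d) (j : nat) : R :=
  inner (grad f (x j)) (s j).

Definition ucbb (f : 'cV[R]_d -> R) (M : nat) (x s : nat -> 'cV[R]_d) (k : nat)
  : 'cV[R]_d :=
  \sum_(maxn 1 (k.-1 - M) <= j < k) (ucbr f x s j *: s j).

Definition ucbg (f : 'cV[R]_d -> R) (lam : R) (M : nat) (x s : nat -> 'cV[R]_d)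
  (k : nat) : 'cV[R]_d :=
  invmx (ucbC lam M s k) *m ucbb f M x s k.

Definition ucb_run (f : 'cV[R]_d -> R) (K : nat) (lam : R) (alpha : nat -> R)
  (M : nat) (U : nat -> R) (x s : nat -> 'cV[R]_d) : Prop :=
  forall k, (1 <= k <= K)%N ->
    [/\ 0 < alpha k,
        enorm (grad f (x k)) <= U k,
        enorm (s k) = 1,
        (forall t : 'cV[R]_d, enorm t = 1 ->
           inner (ucbg f lam M x s k) t + Num.sqrt lam * U k * anorm (invmx (ucbC lam M s k)) t
           <= inner (ucbg f lam M x s k) (s k)
              + Num.sqrt lam * U k * anorm (invmx (ucbC lam M s k)) (s k))
      & x k.+1 = x k - (alpha k * ucbr f x s k) *: s k].

End UCB.

(* Main.v *)
Require Import Defs.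
From HB Require Import structures.
From mathcomp Require Import all_boot all_order all_algebra.
From mathcomp Require Import all_classical all_reals all_analysis.
From mathcomp Require Import ring lra zify.
Import Order.TTheory GRing.Theory Num.Theory.
Import numFieldNormedType.Exports.
Local Open Scope ring_scope.
Local Open Scope classical_set_scope.
Set Implicit Arguments. Unset Strict Implicit.

Section Aux.
Variables (R : realType) (d : nat).
Implicit Types (u v w : 'cV[R]_d).

Lemma innerE u v : inner u v = \sum_(i < d) u i 0 * v i 0.
Proof. by rewrite /inner mxE; apply: eq_bigr => i _; rewrite mxE. Qed.

Lemma innerC u v : inner u v = inner v u.
Proof. by rewrite !innerE; apply: eq_bigr => i _; rewrite mulrC. Qed.

Lemma innerDr u v w : inner u (v + w) = inner u v + inner u w.
Proof. by rewrite /inner mulmxDr mxE. Qed.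

Lemma innerNr u v : inner u (- v) = - inner u v.
Proof. by rewrite /inner mulmxN mxE. Qed.

Lemma innerBr u v w : inner u (v - w) = inner u v - inner u w.
Proof. by rewrite innerDr innerNr. Qed.

Lemma innerZr u a v : inner u (a *: v) = a * inner u v.
Proof. by rewrite /inner -scalemxAr mxE. Qed.

Lemma inner_sumr u I (r : seq I) (P : pred I) (F : I -> 'cV[R]_d) :
  inner u (\sum_(i <- r | P i) F i) = \sum_(i <- r | P i) inner u (F i).
Proof. by rewrite /inner mulmx_sumr summxE. Qed.

Lemma enormE v : enorm v = Num.sqrt (inner v v).
Proof. by rewrite /enorm innerE; congr Num.sqrt; apply: eq_bigr => i _; rewrite expr2. Qed.

Lemma inner_ge0 v : 0 <= inner v v.
Proof. by rewrite innerE; apply: sumr_ge0 => i _; rewrite -expr2 sqr_ge0. Qed.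

Lemma inner_eq0 v : inner v v = 0 -> v = 0.
Proof.
rewrite innerE => H; apply/matrixP => i j; rewrite ord1 mxE.
have h : v i 0 * v i 0 = 0.
  by apply: (psumr_eq0P _ H) => // j' _; rewrite -expr2 sqr_ge0.
by move/eqP: h; rewrite -expr2 sqrf_eq0 => /eqP.
Qed.

End Aux.

Lemma quad_CS (R : realType) (A B P : R) :
  0 <= B -> (forall c, 0 <= A - c *+ 2 * P + c ^+ 2 * B) -> P ^+ 2 <= A * B.
Proof.
move=> B0 H; have A0 : 0 <= A by have := H 0; rewrite mul0rn mul0r expr0n /= mul0r subr0 addr0.
have [Bp|] := ltP 0 B.
  have := H (P / B).
  have -> : A - (P / B) *+ 2 * P + (P / B) ^+ 2 * B = (A * B - P ^+ 2) / B.
    by field; rewrite gt_eqF.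
  by rewrite pmulr_lge0 ?invr_gt0 // subr_ge0.
move=> B0'; have Bz : B = 0 by apply/eqP; rewrite eq_le B0' B0.
rewrite Bz mulr0.
have [Pz|Pn] := eqVneq P 0; first by rewrite Pz expr0n.
have := H ((A + 1) / (P *+ 2)).
have -> : A - (A + 1) / (P *+ 2) *+ 2 * P + ((A + 1) / (P *+ 2)) ^+ 2 * B = -1.
  rewrite Bz mulr0 addr0; field; by rewrite Pn.
by rewrite oppr_ge0 ler10.
Qed.

Lemma sum_CS (R : realType) I (r : seq I) (P : pred I) (a b : I -> R) :
  (\sum_(i <- r | P i) a i * b i) ^+ 2 <=
  (\sum_(i <- r | P i) a i ^+ 2) * (\sum_(i <- r | P i) b i ^+ 2).
Proof.
apply: quad_CS; first by apply: sumr_ge0 => i _; rewrite sqr_ge0.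
move=> c.
have <- : \sum_(i <- r | P i) (a i - c * b i) ^+ 2 =
  \sum_(i <- r | P i) a i ^+ 2 - c *+ 2 * (\sum_(i <- r | P i) a i * b i)
  + c ^+ 2 * (\sum_(i <- r | P i) b i ^+ 2).
  rewrite !mulr_sumr -sumrB -big_split /=; apply: eq_bigr => i _; ring.
by apply: sumr_ge0 => i _; rewrite sqr_ge0.
Qed.

Lemma inner_CS (R : realType) d (u v : 'cV[R]_d) :
  `|inner u v| <= enorm u * enorm v.
Proof.
rewrite !enormE -sqrtrM ?inner_ge0 // -sqrtr_sqr ler_sqrt ?mulr_ge0 ?inner_ge0 //.
have := @sum_CS R _ (index_enum 'I_d) predT (fun i => u i 0) (fun i => v i 0).
by rewrite !innerE; congr (_ <= _ * _); apply: eq_bigr => i _; rewrite expr2.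
Qed.

Lemma sum_abs_CS (R : realType) (m n : nat) (w : nat -> R) :
  (\sum_(m <= j < n) `|w j|) ^+ 2 <= (n - m)%:R * \sum_(m <= j < n) w j ^+ 2.
Proof.
have e1 : \sum_(m <= j < n) 1 * `|w j| = \sum_(m <= j < n) `|w j|.
  by apply: eq_bigr => j _; rewrite mul1r.
have e2 : \sum_(m <= j < n) (1:R) ^+ 2 = (n - m)%:R.
  by rewrite (eq_bigr (fun _ => 1)) ?sumr_const_nat // => j _; rewrite expr1n.
have e3 : \sum_(m <= j < n) `|w j| ^+ 2 = \sum_(m <= j < n) w j ^+ 2.
  by apply: eq_bigr => j _; rewrite real_normK ?num_real.
rewrite -e1 -e2 -e3.
exact: (@sum_CS R _ (index_iota m n) predT (fun _ => 1) (fun j => `|w j|)).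
Qed.

Lemma inner0r (R : realType) d (u : 'cV[R]_d) : inner u 0 = 0.
Proof. by rewrite /inner mulmx0 mxE. Qed.

Lemma enormN (R : realType) d (v : 'cV[R]_d) : enorm (- v) = enorm v.
Proof. by rewrite /enorm; congr Num.sqrt; apply: eq_bigr => i _; rewrite mxE sqrrN. Qed.

Lemma enorm_ge0 (R : realType) d (v : 'cV[R]_d) : 0 <= enorm v.
Proof. by rewrite /enorm sqrtr_ge0. Qed.

Theorem lemma3 (R : realType) (d : nat) (f : 'cV[R]_d -> R)
  (Lc : R) (K : nat) (lam : R) (alpha : nat -> R) (M : nat) (U : nat -> R)
  (x s : nat -> 'cV[R]_d) :
  (* f continuously differentiable on the level set L(x_1) *)
  (forall z, levelset f (x 1%N) z -> differentiable f z) ->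
  {within levelset f (x 1%N), continuous (grad f)} ->
  (* f bounded below on L(x_1) *)
  (exists m : R, forall z, levelset f (x 1%N) z -> m <= f z) ->
  (* grad f is L-Lipschitz on L(x_1) *)
  0 <= Lc ->
  (forall y z, levelset f (x 1%N) y -> levelset f (x 1%N) z ->
     enorm (grad f y - grad f z) <= Lc * enorm (y - z)) ->
  0 < lam ->
  ucb_run f K lam alpha M U x s ->
  forall k, (1 <= k <= K)%N ->
  forall t : 'cV[R]_d, enorm t = 1 ->
  `| inner t (grad f (x k) - ucbg f lam M x s k) |
    <= Num.sqrt ((d * M.+1)%:R / lam)
         * (\sum_(maxn 1 (k - M.+1) <= i < k) enorm (grad f (x i) - grad f (x i.+1)))
       + Num.sqrt lam * enorm (grad f (x k)) * anorm (invmx (ucbC lam M s k)) t.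
Proof.
move=> _ _ _ _ _ lam0 run k /andP[k1 kK] t t1.
have dpos : (0 < d)%N.
  rewrite lt0n; apply/negP => /eqP d0.
  have : enorm t = 0.
    rewrite /enorm big1 ?sqrtr0 // => i _.
    by move: (ltn_ord i); rewrite [X in (_ < X)%N]d0.
  by rewrite t1 => /eqP; rewrite oner_eq0.
have lo_eq : maxn 1 (k - M.+1) = maxn 1 (k.-1 - M) by congr maxn; lia.
rewrite lo_eq.
set lo := maxn 1 (k.-1 - M).
set C := ucbC lam M s k.
have CE : forall v, C *m v = lam *: v + \sum_(lo <= j < k) inner (s j) v *: s j.
  move=> v; rewrite /C /ucbC -/lo mulmxDl mul_scalar_mx mulmx_suml; congr (_ + _).
  apply: eq_bigr => j _; rewrite -mulmxA (mx11_scalar ((s j)^T *m v)) mul_mx_scalar.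
  by [].
have CI : forall u v, inner u (C *m v)
    = lam * inner u v + \sum_(lo <= j < k) inner (s j) v * inner u (s j).
  move=> u v; rewrite CE innerDr innerZr inner_sumr; congr (_ + _).
  by apply: eq_bigr => j _; rewrite innerZr.
have Csym : forall u v, inner u (C *m v) = inner (C *m u) v.
  move=> u v; rewrite CI (innerC (C *m u)) CI (innerC v u); congr (_ + _).
  by apply: eq_bigr => j _; rewrite (innerC (s j) v) (innerC (s j) u) mulrC.
have Cpos : forall v, lam * inner v v <= inner v (C *m v).
  move=> v; rewrite CI lerDl; apply: sumr_ge0 => j _.
  by rewrite (innerC v (s j)) -expr2 sqr_ge0.
have Cunit : C \in unitmx.
  rewrite unitmxE unitfE -det_tr; apply/negP => /det0P [v vn0 vC].
  have Cv : C *m v^T = 0 by rewrite -(trmxK (C *m v^T)) trmx_mul trmxK vC trmx0.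
  have : inner v^T v^T = 0.
    apply/eqP; rewrite eq_le inner_ge0 andbT.
    by have := Cpos v^T; rewrite Cv inner0r pmulr_rle0.
  move/inner_eq0 => /(congr1 trmx); rewrite trmxK trmx0 => v0.
  by rewrite v0 eqxx in vn0.
set P := invmx C.
have CP : forall v : 'cV[R]_d, C *m (P *m v) = v.
  by move=> v; rewrite mulmxA mulmxV // mul1mx.
have Psym : forall a b, inner a (P *m b) = inner (P *m a) b.
  by move=> a b; rewrite -{1}(CP a) -Csym CP.
set u := P *m t.
set G := grad f (x k).
have Cu : C *m u = t := CP t.
have key : inner t (G - ucbg f lam M x s k) = lam * inner u G
    + \sum_(lo <= j < k) (inner (s j) G - ucbr f x s j) * inner u (s j).
  rewrite innerBr /ucbg -/C -/P Psym -/u /ucbb -/lo inner_sumr.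
  rewrite -[t in inner t G]Cu -Csym CI.
  rewrite -addrA; congr (_ + _); rewrite -sumrB; apply: eq_bigr => j _.
  by rewrite innerZr (innerC u (s j)) mulrBl.
have anE : anorm P t = Num.sqrt (inner u t).
  by rewrite /anorm -mulmxA innerC.
set N := inner u u.
set Q := inner u t.
have N0 : 0 <= N := inner_ge0 u.
have QE : Q = lam * N + \sum_(lo <= j < k) inner u (s j) ^+ 2.
  rewrite /Q -[t in inner u t]Cu CI; congr (_ + _).
  by apply: eq_bigr => j _; rewrite (innerC (s j) u) expr2.
have Qle : Q <= Num.sqrt N.
  apply: le_trans (ler_norm _) _; apply: le_trans (inner_CS _ _) _.
  by rewrite t1 mulr1 enormE.
have sumw0 : 0 <= \sum_(lo <= j < k) inner u (s j) ^+ 2.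
  by apply: sumr_ge0 => j _; rewrite sqr_ge0.
have lamNQ : lam * N <= Q by rewrite QE lerDl.
have Qlam : lam * Q <= 1.
  have a0 := sqrtr_ge0 N; have aN := sqr_sqrtr N0.
  move: (Num.sqrt N) a0 aN Qle => a a0 aN Qle'.
  rewrite -aN in lamNQ.
  have [la1|la1] := leP (lam * a) 1.
    by apply: le_trans la1; rewrite ler_pM2l.
  exfalso; nra.
have Q0 : 0 <= Q by apply: le_trans lamNQ; rewrite mulr_ge0 // ltW.
have Qi : Q <= lam^-1 by rewrite -(ler_pM2l lam0) mulfV ?gt_eqF.
set S := \sum_(lo <= i < k) enorm (grad f (x i) - grad f (x i.+1)).
have S0 : 0 <= S by apply: sumr_ge0 => i _; apply: enorm_ge0.
have ebound : forall j, (lo <= j < k)%N -> `|inner (s j) G - ucbr f x s j| <= S.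
  move=> j /andP[lj jk].
  have sj : enorm (s j) = 1.
    have lo1 : (1 <= lo)%N by rewrite /lo leq_maxl.
    by case: (run j); [apply/andP; split; lia|].
  have tel : \sum_(j <= i < k) (grad f (x i.+1) - grad f (x i)) = G - grad f (x j)
    := telescope_sumr (fun i => grad f (x i)) (ltnW jk).
  rewrite /ucbr (innerC (grad f (x j))) -innerBr -tel inner_sumr.
  apply: le_trans (ler_norm_sum _ _ _) _.
  apply: (@le_trans _ _ (\sum_(j <= i < k) enorm (grad f (x i) - grad f (x i.+1)))).
    apply: ler_sum => i _; apply: le_trans (inner_CS _ _) _.
    by rewrite sj mul1r -opprB enormN.
  rewrite /S (big_cat_nat lj (ltnW jk)) /= lerDr.
  by apply: sumr_ge0 => i _; apply: enorm_ge0.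
have nle : ((k - lo) <= d * M.+1)%N.
  have : (k - lo <= M.+1)%N by rewrite /lo; lia.
  move=> h; apply: leq_trans h _; rewrite -{1}(mul1n M.+1) leq_mul2r; lia.
rewrite key anE -/Q.
apply: le_trans (ler_normD _ _) _.
rewrite addrC; apply: lerD.
  apply: le_trans (ler_norm_sum _ _ _) _.
  apply: (@le_trans _ _ (\sum_(lo <= j < k) S * `|inner u (s j)|)).
    rewrite big_nat [X in _ <= X]big_nat; apply: ler_sum => j hj.
    by rewrite normrM; apply: ler_wpM2r => //; apply: ebound.
  rewrite -mulr_sumr mulrC; apply: ler_wpM2r => //.
  have sa0 : 0 <= \sum_(lo <= j < k) `|inner u (s j)|.
    by apply: sumr_ge0 => j _.
  rewrite -(ger0_norm sa0) -sqrtr_sqr ler_sqrt; last first.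
    by apply: divr_ge0; rewrite ?ler0n // ltW.
  apply: le_trans (sum_abs_CS _ _ _) _.
  apply: (@le_trans _ _ ((d * M.+1)%:R * Q)).
    apply: ler_pM; rewrite ?ler0n ?ler_nat //.
    by rewrite QE lerDr mulr_ge0 // ltW.
  by rewrite ler_wpM2l ?ler0n.
rewrite normrM (ger0_norm (ltW lam0)).
apply: le_trans (ler_wpM2l (ltW lam0) (inner_CS u G)) _.
have e : lam * Num.sqrt N = Num.sqrt lam * Num.sqrt (lam * N).
  by rewrite sqrtrM ?(ltW lam0) // mulrA -expr2 sqr_sqrtr // ltW.
rewrite enormE -/N mulrA e -!mulrA; apply: ler_wpM2l; first exact: sqrtr_ge0.
rewrite mulrC; apply: (ler_wpM2l (enorm_ge0 G)).
by rewrite ler_sqrt.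
Qed.
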